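(* Let $X\subset\mathbb{R}^n$ be a nonempty closed convex set with $X$ unbounded, and let $f(x)=c^Tx+\beta$ with $c\in\mathbb{R}^n$, $\beta\in\mathbb{R}$, be bounded from below on $X$. If $X^\infty\cap\mathcal{K}(f)=\{0\}$, then $0\notin\partial f(\infty)+N(\infty;X)$. (Hence for such $f$ and $X$ the two conditions are equivalent.)
   Context: $X^\infty=\{u:\exists t_k\to+\infty,\ \exists x_k\in X,\ x_k/t_k\to u\}$; $f^\infty(d)=\inf\{\liminf_{k} f(t_kd_k)/t_k:\ t_k\to+\infty,\ d_k\to d\}$; $\mathcal{K}(f)=\{d: f^\infty(d)\le 0\}$. $N(\infty;X)$ is the set of $u$ for which there exist $x_k\in X$, $u_k\in\widehat N(x_k;X)$ with $\|x_k\|\to\infty$ and $u_k\to u$, where $\widehat N(x;X)=\{v:\limsup_{z\to x,\,z\in X}\langle v,z-x\rangle/\|z-x\|\le 0\}$. $\partial f(\infty)$ is the set of $u$ for which there exist $x_k\in\mathbb{R}^n$ and $(u_k,v_k)\in N((x_k,f(x_k));\operatorname{epi}f)$ (limiting normal cone) with $\|x_k\|\to\infty$ and $(u_k,v_k)\to(u,-1)$. *)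

(* Defs.v *)
From HB Require Import structures.
From mathcomp Require Import all_boot all_order all_algebra.
From mathcomp Require Import all_classical all_reals all_analysis.
Set Implicit Arguments. Unset Strict Implicit. Unset Printing Implicit Defensive.
Import Order.TTheory GRing.Theory Num.Theory.
Import numFieldNormedType.Exports.
Local Open Scope classical_set_scope.
Local Open Scope ring_scope.

Section Defs.
Variables (R : realType) (n : nat).
Notation vec := 'rV[R]_n.

Definition dotp (u v : vec) : R := \sum_(i < n) u 0 i * v 0 i.
Definition enorm (u : vec) : R := Num.sqrt (dotp u u).

Definition unbounded (X : set vec) : Prop :=
  ~ (exists M : R, forall x, X x -> enorm x <= M).

Definition asympt_cone (X : set vec) : set vec :=
  [set u | exists (t : nat -> R) (x : nat -> vec),
     t @ \oo --> +oo /\ (forall k, X (x k)) /\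
     (fun k => (t k)^-1 *: x k) @ \oo --> u].

Definition asympt_fun (f : vec -> R) (d : vec) : \bar R :=
  ereal_inf [set l | exists (t : nat -> R) (dk : nat -> vec),
     t @ \oo --> +oo /\ dk @ \oo --> d /\
     l = limn_einf (fun k => (f (t k *: dk k) / t k)%:E)].

Definition Kcone (f : vec -> R) : set vec :=
  [set d | (asympt_fun f d <= 0)%E].

Definition frechet_normal (X : set vec) (x v : vec) : Prop :=
  forall eps : R, 0 < eps -> exists delta : R, 0 < delta /\
    forall z, X z -> 0 < enorm (z - x) < delta ->
      dotp v (z - x) <= eps * enorm (z - x).

Definition normal_at_infinity (X : set vec) : set vec :=
  [set u | exists (x : nat -> vec) (uk : nat -> vec),
     (forall k, X (x k)) /\ (forall k, frechet_normal X (x k) (uk k)) /\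
     (fun k => enorm (x k)) @ \oo --> +oo /\ uk @ \oo --> u].

Definition frechet_normal_epi (f : vec -> R) (x : vec) (r : R) (u : vec) (v : R)
  : Prop :=
  forall eps : R, 0 < eps -> exists delta : R, 0 < delta /\
    forall (z : vec) (s : R), f z <= s ->
      let nz := Num.sqrt (dotp (z - x) (z - x) + (s - r) ^+ 2) in
      0 < nz < delta -> dotp u (z - x) + v * (s - r) <= eps * nz.

Definition limiting_normal_epi (f : vec -> R) (x : vec) (r : R) (u : vec) (v : R)
  : Prop :=
  exists (xk : nat -> vec) (rk : nat -> R) (uk : nat -> vec) (vk : nat -> R),
    (forall k, f (xk k) <= rk k) /\
    xk @ \oo --> x /\ rk @ \oo --> r /\
    (forall k, frechet_normal_epi f (xk k) (rk k) (uk k) (vk k)) /\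
    uk @ \oo --> u /\ vk @ \oo --> v.

Definition subdiff_at_infinity (f : vec -> R) : set vec :=
  [set u | exists (x : nat -> vec) (uk : nat -> vec) (vk : nat -> R),
     (fun k => enorm (x k)) @ \oo --> +oo /\
     (forall k, limiting_normal_epi f (x k) (f (x k)) (uk k) (vk k)) /\
     uk @ \oo --> u /\ vk @ \oo --> (-1 : R)].

End Defs.

(* Main.v *)
Require Import Defs.
From HB Require Import structures.
From mathcomp Require Import all_boot all_order all_algebra.
From mathcomp Require Import all_classical all_reals all_analysis.
From mathcomp Require Import ring lra.
Import Order.TTheory GRing.Theory Num.Theory.
Import numFieldNormedType.Exports.
Local Open Scope classical_set_scope.
Local Open Scope ring_scope.


Section H.
Variables (R : realType) (n : nat).
Implicit Types (u v w : 'rV[R]_n).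

Lemma dotpC u v : dotp u v = dotp v u.
Proof. by apply: eq_bigr => i _; rewrite mulrC. Qed.

Lemma dotpDr u v w : dotp u (v + w) = dotp u v + dotp u w.
Proof. by rewrite /dotp -big_split; apply: eq_bigr => i _; rewrite mxE mulrDr. Qed.

Lemma dotpZr u v (a : R) : dotp u (a *: v) = a * dotp u v.
Proof. rewrite /dotp mulr_sumr; apply: eq_bigr => i _; by rewrite mxE mulrCA. Qed.

Lemma dotpNr u v : dotp u (- v) = - dotp u v.
Proof. by rewrite -scaleN1r dotpZr mulN1r. Qed.

Lemma dotpBr u v w : dotp u (v - w) = dotp u v - dotp u w.
Proof. by rewrite dotpDr dotpNr. Qed.

Lemma dotpDl u v w : dotp (v + w) u = dotp v u + dotp w u.
Proof. by rewrite dotpC dotpDr !(dotpC u). Qed.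

Lemma dotpZl u v (a : R) : dotp (a *: v) u = a * dotp v u.
Proof. by rewrite dotpC dotpZr dotpC. Qed.

Lemma dotp0r u : dotp u 0 = 0.
Proof. by rewrite /dotp big1 // => i _; rewrite mxE mulr0. Qed.

Lemma dotp_ge0 u : 0 <= dotp u u.
Proof. by apply: sumr_ge0 => i _; rewrite -expr2 sqr_ge0. Qed.

Lemma dotp_eq0 u : dotp u u = 0 -> u = 0.
Proof.
move=> /eqP; rewrite psumr_eq0; last by move=> i _; rewrite -expr2 sqr_ge0.
move=> /allP H; apply/rowP => i; rewrite mxE.
have /H : (i \in index_enum 'I_n) by rewrite mem_index_enum.
by rewrite /= mulf_eq0 orbb => /eqP.
Qed.

Lemma entry_le u i : (u ord0 i) ^+ 2 <= dotp u u.
Proof.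
rewrite /dotp (bigD1 i) //= -expr2 lerDl.
by apply: sumr_ge0 => j _; rewrite -expr2 sqr_ge0.
Qed.

Lemma cvg_entry (T : Type) (F : set_system T) (FF : Filter F) (f : T -> 'rV[R]_n) u i :
  f x @[x --> F] --> u -> (f x ord0 i) @[x --> F] --> u ord0 i.
Proof.
move=> Hf.
have Hc : continuous (fun N : 'rV[R]_n => N ord0 i).
  by move=> M; apply: differentiable_continuous; apply: differentiable_coord.
exact: (cvg_comp _ _ Hf (Hc u)).
Qed.

Lemma cvg_dotp (T : Type) (F : set_system T) (FF : Filter F) (f g : T -> 'rV[R]_n) u v :
  f x @[x --> F] --> u -> g x @[x --> F] --> v ->
  dotp (f x) (g x) @[x --> F] --> dotp u v.
Proof.
move=> Hf Hg; rewrite /dotp.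
have hc : continuous (fun x : R * R => x.1 + x.2) by move=> x; exact: add_continuous.
have := @cvg_big R 'I_n +%R 0 xpredT hc T F (index_enum 'I_n)
  (fun i x => f x ord0 i * g x ord0 i) (fun i => u ord0 i * v ord0 i) FF.
apply.
move=> i _; apply: cvgM; exact: cvg_entry.
Qed.

End H.


Section H2.
Variables (R : realType) (n : nat).
Implicit Types (u v w : 'rV[R]_n).

Lemma le0_eps (a b : R) : 0 <= b -> (forall eps, 0 < eps -> a <= eps * b) -> a <= 0.
Proof.
move=> b0 H; rewrite leNgt; apply/negP => a0.
have [b00|bp] := eqVneq b 0.
  by have := H 1 ltr01; rewrite b00 mulr0 leNgt a0.
have bp' : 0 < b by rewrite lt_neqAle eq_sym bp b0.
have e0 : 0 < a / (2 * b) by rewrite divr_gt0 // mulr_gt0.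
have := H _ e0; have -> : a / (2 * b) * b = a / 2 by field; rewrite bp.
move=> h; lra.
Qed.

Lemma epi_normal (c x u : 'rV[R]_n) (beta r v : R) :
  dotp c x + beta <= r ->
  frechet_normal_epi (fun x => dotp c x + beta) x r u v -> u = - v *: c.
Proof.
move=> hr H.
set w := u + v *: c.
suff : dotp w w = 0.
  by move/dotp_eq0 => /eqP; rewrite addr_eq0 => /eqP ->; rewrite scaleNr.
apply/eqP; rewrite eq_le dotp_ge0 andbT.
have [->//|wn0] := eqVneq (dotp w w) 0.
have wp : 0 < dotp w w by rewrite lt_neqAle eq_sym wn0 dotp_ge0.
set N := Num.sqrt (dotp w w + (dotp c w) ^+ 2).
have Np : 0 < N by rewrite sqrtr_gt0 ltr_wpDr // sqr_ge0.
apply: (@le0_eps _ N (ltW Np)) => eps e0.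
have [delta [d0 Hd]] := H eps e0.
set t := delta / (2 * N).
have tp : 0 < t by rewrite divr_gt0 // mulr_gt0.
have := Hd (x + t *: w) (r + t * dotp c w).
rewrite dotpDr dotpZr addrAC lerD2r => /(_ hr).
have -> : x + t *: w - x = t *: w by rewrite addrAC subrr add0r.
have -> : r + t * dotp c w - r = t * dotp c w by rewrite addrAC subrr add0r.
have -> : Num.sqrt (dotp (t *: w) (t *: w) + (t * dotp c w) ^+ 2) = t * N.
  rewrite dotpZl dotpZr exprMn mulrA -expr2 -mulrDr sqrtrM ?sqr_ge0 //.
  by rewrite sqrtr_sqr ger0_norm // ltW.
have tN : t * N = delta / 2.
  by rewrite /t; field; rewrite gt_eqF.
rewrite /= tN divr_gt0 //= ltr_pdivrMr // ltr_pMr // ltr1n => /(_ isT).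
have -> : dotp u (t *: w) + v * (t * dotp c w) = t * dotp w w.
  by rewrite /w dotpZr dotpDl dotpZl mulrDr (mulrCA v).
by rewrite -tN mulrCA ler_pM2l.
Qed.

Lemma convex_normal (X : set 'rV[R]_n) x z v :
  convex_set X -> X x -> X z -> frechet_normal X x v -> dotp v (z - x) <= 0.
Proof.
move=> cX Xx Xz H.
have [->|zx] := eqVneq z x; first by rewrite subrr dotp0r.
set E := enorm (z - x).
have Ep : 0 < E.
  rewrite /E /enorm sqrtr_gt0 lt_neqAle dotp_ge0 andbT eq_sym.
  by apply/eqP => /dotp_eq0 /eqP; rewrite subr_eq0 (negbTE zx).
apply: (@le0_eps _ E (ltW Ep)) => eps e0.
have [delta [d0 Hd]] := H eps e0.
set t := delta / (delta + E).
have tp : 0 < t by rewrite divr_gt0 // addr_gt0.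
have t1 : t <= 1 by rewrite ler_pdivrMr ?addr_gt0 // mul1r lerDl ltW.
pose ti : {i01 R} := Itv01 (ltW tp) t1.
have Xy : X (t *: z + (1 - t) *: x).
  have := cX z x ti (mem_set Xz) (mem_set Xx).
  by rewrite inE.
have ey : t *: z + (1 - t) *: x - x = t *: (z - x).
  by rewrite scalerBl scale1r addrCA addrAC subrr add0r scalerBr.
have := Hd _ Xy; rewrite ey.
have nE : enorm (t *: (z - x)) = t * E.
  by rewrite /enorm dotpZl dotpZr mulrA -expr2 sqrtrM ?sqr_ge0 // sqrtr_sqr ger0_norm // ltW.
rewrite nE mulr_gt0 //= dotpZr.
have tE : t * E < delta.
  rewrite /t mulrAC ltr_pdivrMr ?addr_gt0 // mulrDr ltrDr; exact: mulr_gt0.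
by move=> /(_ tE); rewrite mulrCA ler_pM2l.
Qed.

End H2.


Section H3.
Variables (R : realType) (n : nat).

Lemma subseq_oo (phi : nat -> nat) : (forall m, (m <= phi m)%N) ->
  phi m @[m --> \oo] --> \oo.
Proof.
move=> Hp; suff : ((phi m)%:R : R) @[m --> \oo] --> +oo by move/cvgrnyP.
have h := proj2 (@cvgryPge R nat \oo _ (fun m => (phi m)%:R)).
apply: h => A.
have := proj1 (@cvgryPge R nat \oo _ (fun m : nat => m%:R : R)) (@cvgr_idn R) A.
move=> [N _ HN]; exists N => // m /= Nm.
by apply: (le_trans (HN _ Nm)); rewrite ler_nat.
Qed.

Lemma cvg_subseq_comp (T : topologicalType) (phi : nat -> nat) (u : nat -> T) (l : T) :
  (forall m, (m <= phi m)%N) -> u @ \oo --> l -> (u \o phi) @ \oo --> l.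
Proof. move=> Hp Hu; have := cvg_comp phi u (@subseq_oo phi Hp) Hu. by []. Qed.

Lemma cluster_subseq (d : nat -> 'rV[R]_n) (p : 'rV[R]_n) :
  cluster (d @ \oo) p ->
  exists phi : nat -> nat, (forall m, (m <= phi m)%N) /\ (d \o phi) @ \oo --> p.
Proof.
move=> Hc.
have H : forall m : nat, exists k, (m <= k)%N /\ ball p (m.+1%:R^-1) (d k).
  move=> m.
  have FA : (d @ \oo) [set v | exists k, (m <= k)%N /\ v = d k].
    by exists m => // k /= mk; exists k.
  have mp : 0 < (m.+1%:R : R)^-1 by rewrite invr_gt0 ltr0Sn.
  have [v [[k [mk ->]] Bv]] := Hc _ _ FA (nbhsx_ballx p _ mp).
  by exists k.
have [phi Hphi] := choice H.
exists phi; split; first by move=> m; case: (Hphi m).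
apply/cvg_ballP => eps e0.
have := proj1 (@cvgryPgt R nat \oo _ (fun m : nat => m%:R : R)) (@cvgr_idn R) (eps^-1).
move=> [N _ HN]; exists N => // m /= Nm; have hm := HN _ Nm.
case: (Hphi m) => _; apply: le_ball.
rewrite invf_ple ?posrE // ?ltr0Sn //.
by rewrite (le_trans (ltW hm)) // ler_nat.
Qed.

End H3.


Lemma lim_scale (R : realType) (n : nat) (c : 'rV[R]_n) (uk : nat -> 'rV[R]_n)
  (vk : nat -> R) u v :
  (forall j, uk j = - vk j *: c) -> uk @ \oo --> u -> vk @ \oo --> v -> u = - v *: c.
Proof.
move=> E Hu Hv.
have E' : uk = (fun j => - vk j *: c) by apply: funext => j; exact: E.
rewrite E' in Hu.
have H2 : (fun j => - vk j *: c) @ \oo --> - v *: c.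
  by apply: cvgZr_tmp; apply: cvgN.
exact: (cvg_unique _ Hu H2).
Qed.

Lemma limiting_epi (R : realType) (n : nat) (c : 'rV[R]_n) (beta : R) x r u v :
  limiting_normal_epi (fun x => dotp c x + beta) x r u v -> u = - v *: c.
Proof.
move=> [xk [rk [uk [vk [Hf [_ [_ [Hn [Hu Hv]]]]]]]]].
apply: (@lim_scale R n c uk vk u v _ Hu Hv) => j.
exact: epi_normal (Hf j) (Hn j).
Qed.

Theorem mainTheorem3 (R : realType) (n : nat) (X : set 'rV[R]_n)
  (c : 'rV[R]_n) (beta : R) :
  X !=set0 -> closed X -> convex_set X -> unbounded X ->
  (exists m : R, forall x, X x -> m <= dotp c x + beta) ->
  asympt_cone X `&` Kcone (fun x => dotp c x + beta) = [set 0] ->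
  ~ (exists a b, subdiff_at_infinity (fun x => dotp c x + beta) a /\
                 normal_at_infinity X b /\ a + b = 0).
Proof.
move=> [z0 Xz0] _ cX _ _ Hint [a [b [Ha [Hb ab]]]].
have ac : a = c.
  move: Ha => [x [uk [vk [_ [Hl [Hu Hv]]]]]].
  rewrite (@lim_scale R n c uk vk a (-1) _ Hu Hv) ?opprK ?scale1r //.
  move=> k; exact: limiting_epi (Hl k).
have bc : b = - c by rewrite -ac; apply/eqP; rewrite -addr_eq0 addrC ab.
move: Hb => [x [uk [Xx [Hn [Hx Hu]]]]].
set d := fun k => (enorm (x k))^-1 *: x k.
have dle : forall k, dotp (d k) (d k) <= 1.
  move=> k; rewrite /d dotpZl dotpZr mulrA.
  have [e0|ep] := eqVneq (enorm (x k)) 0.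
    by rewrite e0 invr0 !mul0r ler01.
  have -> : dotp (x k) (x k) = enorm (x k) ^+ 2 by rewrite /enorm sqr_sqrtr // dotp_ge0.
  by rewrite -expr2 -exprMn mulVf // expr1n.
pose S := [set v : 'rV[R]_n | forall i, (fun _ : 'I_n => `[-1, 1]%classic) i (v ord0 i)].
have cS : compact S.
  by apply: rV_compact => i; exact: segment_compact.
have FS : (d @ \oo) S.
  exists 0%N => // k _ i /=; rewrite in_itv /=.
  have := le_trans (@entry_le R n (d k) i) (dle k) => h.
  apply/andP; split; nra.
have [p [_ Cp]] := cS _ _ FS.
have [phi [Hphi Hd]] := @cluster_subseq R n d p Cp.
set t := fun m => enorm (x (phi m)).
have Ht : t m @[m --> \oo] --> +oo.
  exact: (cvg_comp phi (fun k => enorm (x k)) (@subseq_oo R phi Hphi) Hx).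
have tpos : \forall m \near \oo, 0 < t m.
  exact: (proj1 (@cvgryPgt R nat \oo _ t) Ht 0).
have tinv : (fun m => (t m)^-1) @ \oo --> (0 : R).
  exact: (proj2 (@gtr0_cvgV0 R nat \oo _ t tpos) Ht).
have Hud : (uk \o phi) @ \oo --> b := @cvg_subseq_comp R _ phi uk b Hphi Hu.
have pp : dotp p p = 1.
  have h1 : (fun m => dotp ((d \o phi) m) ((d \o phi) m)) @ \oo --> dotp p p.
    by apply: (@cvg_dotp R n).
  have h2 : (fun m => dotp ((d \o phi) m) ((d \o phi) m)) @ \oo --> (1 : R).
    have e : {near \oo, (fun _ => (1:R)) =1 (fun m => dotp ((d \o phi) m) ((d \o phi) m))}.
      near=> m.
      have tm : 0 < t m by near: m.
      rewrite /= /d dotpZl dotpZr mulrA -expr2.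
      rewrite -/(t m) (_ : dotp (x (phi m)) (x (phi m)) = t m ^+ 2).
        by rewrite -exprMn mulVf ?gt_eqF // expr1n.
      by rewrite /t /enorm sqr_sqrtr // dotp_ge0.
    exact: (cvg_trans (near_eq_cvg e) (cvg_cst _)).
  exact: (cvg_unique _ h1 h2).
have cp : dotp c p <= 0.
  have HL : (fun m => (t m)^-1 * dotp (uk (phi m)) z0) @ \oo --> 0 * dotp b z0.
    apply: cvgM => //.
    by apply: (@cvg_dotp R n nat \oo _ (uk \o phi) (fun=> z0)) => //; exact: cvg_cst.
  have HR : (fun m => dotp (uk (phi m)) (d (phi m))) @ \oo --> dotp b p.
    by apply: (@cvg_dotp R n nat \oo _ (uk \o phi) (d \o phi)).
  have HLR : \forall m \near \oo, (t m)^-1 * dotp (uk (phi m)) z0 <= dotp (uk (phi m)) (d (phi m)).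
    near=> m.
    have tm : 0 < t m by near: m.
    have := @convex_normal R n X _ _ _ cX (Xx (phi m)) Xz0 (Hn (phi m)).
    rewrite dotpBr subr_le0 /d dotpZr -/(t m) => h.
    by rewrite ler_pM2l // invr_gt0.
  have HG : (fun m => dotp (uk (phi m)) (d (phi m)) - (t m)^-1 * dotp (uk (phi m)) z0)
     @ \oo --> dotp b p - 0 * dotp b z0 by apply: cvgB.
  have := @closed_cvg nat R \oo _ _ [set x | 0 <= x] (@closed_ge R 0) _ _ HG.
  rewrite /= mul0r subr0 bc dotpC dotpNr dotpC oppr_ge0; apply.
  by apply: filterS HLR => m /=; rewrite subr_ge0.
have pK : Kcone (fun x => dotp c x + beta) p.
  rewrite /Kcone /asympt_fun /=.
  apply: ge_ereal_inf.
  exists (limn_einf (fun k => ((dotp c (t k *: p) + beta) / t k)%:E)).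
    by exists t, (fun=> p); split => //; split => //; exact: cvg_cst.
  have g : (fun k => (dotp c (t k *: p) + beta) / t k) @ \oo --> dotp c p.
    have e : {near \oo, (fun k => dotp c p + beta * (t k)^-1) =1
                        (fun k => (dotp c (t k *: p) + beta) / t k)}.
      near=> m.
      have tm : 0 < t m by near: m.
      by rewrite /= dotpZr mulrDl mulrAC mulfV ?gt_eqF // mul1r.
    apply: (cvg_trans (near_eq_cvg e)).
    suff : (fun k => dotp c p + beta * (t k)^-1) @ \oo --> dotp c p + beta * 0 by rewrite mulr0 addr0.
    apply: cvgD; first exact: cvg_cst.
    by apply: cvgM => //; exact: cvg_cst.
  have g' : (fun k => ((dotp c (t k *: p) + beta) / t k)%:E) @ \oo --> (dotp c p)%:E.
    by apply: cvg_EFin => //; near=> m.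
  by rewrite (cvg_limn_einf_sup g').1 lee_fin.
have pA : asympt_cone X p.
  by exists t, (x \o phi); split => //; split => // k; exact: Xx.
have : (asympt_cone X `&` Kcone (fun x => dotp c x + beta)) p by split.
rewrite Hint => /= p0.
by move: pp; rewrite p0 dotp0r => /eqP; rewrite eq_sym oner_eq0.
Unshelve. all: by end_near.
Qed.
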